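(* Let $\Omega\subseteq\mathbb{R}^n$ be bounded and measurable, $Y$ a Hilbert space, $S:L^2(\Omega)\to Y$ linear and continuous, $z\in Y$, $u_a,u_b\in L^\infty(\Omega)$, $u_a\le u_b$, $U_{\mathrm{ad}}=\{u\in L^2(\Omega):u_a\le u\le u_b\text{ a.e.}\}$, and let $(S_h)_h$ and $\delta$ be as in the context. Let $u^\dagger$ be a solution of $\min_{u\in U_{\mathrm{ad}}}\frac12\|Su-z\|_Y^2$ satisfying the source condition: there exists $w\in Y$ with $u^\dagger=P_{U_{\mathrm{ad}}}(S^\ast w)$. Let $(\varepsilon_k)_k$ be a sequence of positive real numbers, let $h>0$ be given, and let $(u_k^{\mathrm{in}})_k$ be a sequence generated by the inexact Bregman algorithm described in the context. Then there is a constant $c>0$ (independent of $k$) such that for all $k$ \[\sum_{i=1}^k\frac1{\alpha_i}\|u_i^{\mathrm{in}}-u^\dagger\|^2\le c\Big(1+\sum_{i=1}^kR_i+\sum_{i=1}^kH_i\Big),\] where \[R_i:=\frac{\varepsilon_i}{\alpha_i}+\frac{\varepsilon_i^2}{\alpha_i^2}+\frac{\gamma_{i-1}\varepsilon_i}{\alpha_i}+\frac{\varepsilon_i^2}{\alpha_i},\qquad H_i:=\delta(h)\Big[\frac{\rho_i}{\alpha_i}+\frac{\gamma_{i-1}}{\alpha_i}+\frac{\gamma_{i-1}\rho_i}{\alpha_i}\Big]+\delta(h)^2\Big[\frac{\rho_i^2}{\alpha_i^2}+\frac{\rho_i^2}{\alpha_i}\Big].\]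
   Context: $\|\cdot\|,(\cdot,\cdot)$: norm and inner product of $L^2(\Omega)$; $P_{U_{\mathrm{ad}}}$: $L^2$-projection onto $U_{\mathrm{ad}}$; $S^\ast$ adjoint. Discretization: for each $h$, $S_h:L^2(\Omega)\to Y$ is linear continuous with finite-dimensional range, and there is a continuous, monotonically increasing $\delta:\mathbb{R}^+\to\mathbb{R}^+$, $\delta(0)=0$, with $\|(S-S_h)u_h\|_Y+\|(S^\ast-S_h^\ast)(S_hu_h-z)\|\le\delta(h)$ for all $h\ge0$, $u_h\in U_{\mathrm{ad}}$. $(\alpha_k)_k$ is a bounded sequence of positive reals, $\gamma_k:=\sum_{j=1}^k\alpha_j^{-1}$ ($\gamma_0=0$), $\rho_k:=\sqrt{\alpha_k^{-1}(1+\alpha_k^{-1})}$. Define $\mathcal B(\alpha,\lambda,u):=(1+\frac1\alpha)\|u-P_{U_{\mathrm{ad}}}(\frac1\alpha S_h^\ast(z-S_hu)+\lambda)\|$. Inexact Bregman algorithm: $u_0^{\mathrm{in}}=P_{U_{\mathrm{ad}}}(0)$, $\lambda_0^{\mathrm{in}}=0$; for $k=1,2,\dots$ find $u_k^{\mathrm{in}}\in U_{\mathrm{ad}}$ with $\mathcal B(\alpha_k,\lambda_{k-1}^{\mathrm{in}},u_k^{\mathrm{in}})\le\varepsilon_k$, then set $\lambda_k^{\mathrm{in}}=\sum_{i=1}^k\frac1{\alpha_i}S_h^\ast(z-S_hu_i^{\mathrm{in}})$. *)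

(* Defs.v *)
From HB Require Import structures.
From mathcomp Require Import all_boot all_order all_algebra.
From mathcomp Require Import all_classical all_reals all_analysis.
Set Implicit Arguments.
Unset Strict Implicit.
Unset Printing Implicit Defensive.
Import Order.TTheory GRing.Theory Num.Theory.
Import numFieldNormedType.Exports.
Local Open Scope classical_set_scope.
Local Open Scope ring_scope.

Section L2Omega.
(* Elements of L^2(Omega) are represented by functions T -> R; only their
   values on Omega matter, and functions equal a.e. on Omega have the same
   L^2 norm / inner product. *)
Context {d : measure_display} {T : measurableType d} {R : realType}.
Variables (mu : {measure set T -> \bar R}) (Omega : set T).

Definition L2 (f : T -> R) : Prop :=
  measurable_fun Omega f /\ mu.-integrable Omega (fun x => ((f x) ^+ 2)%:E).

Definition ip2 (f g : T -> R) : R := Rintegral mu Omega (fun x => f x * g x).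
Definition nrm2 (f : T -> R) : R := Num.sqrt (Rintegral mu Omega (fun x => (f x) ^+ 2)).

Definition Linf (f : T -> R) : Prop :=
  measurable_fun Omega f /\
  exists M : R, {ae mu, forall x, Omega x -> `|f x| <= M}.

Definition Uad (ua ub : T -> R) (u : T -> R) : Prop :=
  L2 u /\ {ae mu, forall x, Omega x -> ua x <= u x <= ub x}.

Definition is_L2proj (U : (T -> R) -> Prop) (P : (T -> R) -> (T -> R)) : Prop :=
  forall v, L2 v -> U (P v) /\
    forall q, U q -> nrm2 (fun x => v x - P v x) <= nrm2 (fun x => v x - q x).

Definition lin_cont {Y : normedModType R} (A : (T -> R) -> Y) : Prop :=
  (forall (a : R) f g, L2 f -> L2 g ->
     A (fun x => a * f x + g x) = a *: A f + A g) /\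
  (exists C : R, forall f, L2 f -> `|A f| <= C * nrm2 f).

Definition finite_range {Y : normedModType R} (A : (T -> R) -> Y) : Prop :=
  exists (m : nat) (e : 'I_m -> Y), forall f, L2 f ->
    exists c : 'I_m -> R, A f = \sum_(i < m) c i *: e i.

Definition is_adjoint {Y : normedModType R} (ipY : Y -> Y -> R)
  (A : (T -> R) -> Y) (Astar : Y -> (T -> R)) : Prop :=
  forall y, L2 (Astar y) /\ forall u, L2 u -> ip2 (Astar y) u = ipY (A u) y.

End L2Omega.

(* ipY is an inner product on the normed space Y inducing its norm;
   together with completeness of Y this makes Y a real Hilbert space *)
Definition inner_product_of {R : realType} {Y : normedModType R}
  (ipY : Y -> Y -> R) : Prop :=
  (forall x y, ipY x y = ipY y x) /\
  (forall (a : R) x y z, ipY (a *: x + y) z = a * ipY x z + ipY y z) /\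
  (forall x, ipY x x = `|x| ^+ 2).

Definition gam {R : realType} (alpha : nat -> R) (k : nat) : R :=
  \sum_(1 <= j < k.+1) (alpha j)^-1.

Definition rho {R : realType} (alpha : nat -> R) (k : nat) : R :=
  Num.sqrt ((alpha k)^-1 * (1 + (alpha k)^-1)).

Definition Rterm {R : realType} (alpha eps : nat -> R) (i : nat) : R :=
  eps i / alpha i + (eps i) ^+ 2 / (alpha i) ^+ 2
  + gam alpha i.-1 * eps i / alpha i + (eps i) ^+ 2 / alpha i.

Definition Hterm {R : realType} (alpha : nat -> R) (dh : R) (i : nat) : R :=
  dh * (rho alpha i / alpha i + gam alpha i.-1 / alpha i
        + gam alpha i.-1 * rho alpha i / alpha i)
  + dh ^+ 2 * ((rho alpha i) ^+ 2 / (alpha i) ^+ 2 + (rho alpha i) ^+ 2 / alpha i).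

Section Bregman.
Context {d : measure_display} {T : measurableType d} {R : realType}.
Context {Y : normedModType R}.
Variables (mu : {measure set T -> \bar R}) (Omega : set T).
Variables (P : (T -> R) -> (T -> R)) (Sh : (T -> R) -> Y) (Shstar : Y -> (T -> R))
  (z : Y).

Definition Bres (a : R) (lam u : T -> R) : R :=
  (1 + a^-1) *
  nrm2 mu Omega (fun x => u x - P (fun y => a^-1 * Shstar (z - Sh u) y + lam y) x).

Definition lam_in (alpha : nat -> R) (u : nat -> T -> R) (k : nat) : T -> R :=
  fun x => \sum_(1 <= i < k.+1) (alpha i)^-1 * Shstar (z - Sh (u i)) x.

Definition inexact_bregman (U : (T -> R) -> Prop) (alpha eps : nat -> R)
  (u : nat -> T -> R) : Prop :=
  u 0%N = P (fun _ => 0) /\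
  forall k, (0 < k)%N ->
    U (u k) /\ Bres (alpha k) (lam_in alpha u k.-1) (u k) <= eps k.

End Bregman.

(* Main.v *)
Require Import Defs.
From HB Require Import structures.
From mathcomp Require Import all_boot all_order all_algebra.
From mathcomp Require Import all_classical all_reals all_analysis.
From mathcomp Require Import ring lra measurable_realfun.
Import Order.TTheory GRing.Theory Num.Theory.
Import numFieldNormedType.Exports.
Local Open Scope classical_set_scope.
Local Open Scope ring_scope.

Set Implicit Arguments.
Unset Strict Implicit.

Section L2lemmas.
Context {d : measure_display} {T : measurableType d} {R : realType}.
Variables (mu : {measure set T -> \bar R}) (Omega : set T).
Hypothesis mO : measurable Omega.

Local Notation L2 := (L2 mu Omega).
Local Notation ip := (ip2 mu Omega).
Local Notation nrm := (nrm2 mu Omega).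

Lemma rl1 (a b : R) : `|a * b| <= `|a ^+ 2 + b ^+ 2|.
Proof.
rewrite (ger0_norm (addr_ge0 (sqr_ge0 a) (sqr_ge0 b))) normrM.
rewrite -(real_normK (num_real a)) -(real_normK (num_real b)).
have := normr_ge0 a; have := normr_ge0 b; have := sqr_ge0 (`|a| - `|b|). nra.
Qed.

Lemma rl2 (a b c : R) : `|(a * b + c) ^+ 2| <= `|2 * a ^+ 2 * b ^+ 2 + 2 * c ^+ 2|.
Proof.
rewrite ger0_norm ?sqr_ge0 // ger0_norm; last first.
  by rewrite addr_ge0 // mulr_ge0 // ?sqr_ge0 // mulr_ge0 // sqr_ge0.
have := sqr_ge0 (a * b - c); nra.
Qed.

Lemma int_mul f g : L2 f -> L2 g ->
  mu.-integrable Omega (EFin \o (fun x => f x * g x)).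
Proof.
move=> [mf iff] [mg igg].
apply: (@le_integrable _ _ _ mu Omega mO _ (fun x => ((f x)^+2 + (g x)^+2)%:E)).
- by apply/measurable_EFinP; apply: measurable_funM.
- by move=> x _ /=; rewrite lee_fin; exact: rl1.
- apply: (eq_integrable mO _ _ _ (integrableD mO iff igg)).
  by move=> x _ /=; rewrite EFinD.
Qed.

Lemma L2_lin (a : R) f g : L2 f -> L2 g -> L2 (fun x => a * f x + g x).
Proof.
move=> Lf Lg; have [mf iff] := Lf; have [mg igg] := Lg; split.
  by apply: measurable_funD => //; apply: measurable_funM.
apply: (@le_integrable _ _ _ mu Omega mO _
   (fun x => (2 * a ^+ 2 * (f x)^+2 + 2 * (g x)^+2)%:E)).
- apply/measurable_EFinP; apply: measurable_funX.
  by apply: measurable_funD => //; apply: measurable_funM.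
- by move=> x _ /=; rewrite lee_fin; exact: rl2.
- apply: (eq_integrable mO _ _ _ (integrableD mO (integrableZl mO (2 * a ^+ 2) iff)
     (integrableZl mO 2 igg))).
  by move=> x _ /=; rewrite EFinD !EFinM.
Qed.

Lemma ip2C f g : ip f g = ip g f.
Proof. by rewrite /ip2; apply: eq_Rintegral => x _; rewrite mulrC. Qed.

Lemma ip2_lin (a : R) f f' g : L2 f -> L2 f' -> L2 g ->
  ip (fun x => a * f x + f' x) g = a * ip f g + ip f' g.
Proof.
move=> Lf Lf' Lg; rewrite /ip2.
rewrite (_ : Rintegral mu Omega (fun x => (a * f x + f' x) * g x) =
  Rintegral mu Omega (fun x => a * (f x * g x) + f' x * g x)); last first.
  by apply: eq_Rintegral => x _; rewrite mulrDl mulrA.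
rewrite RintegralD //; first by rewrite RintegralZl //; exact: int_mul.
apply: (eq_integrable mO _ _ _ (integrableZl mO a (int_mul Lf Lg))).
by move=> x _ /=; rewrite EFinM.
all: exact: int_mul.
Qed.

Lemma nrm2_ge0 f : 0 <= nrm f.
Proof. exact: sqrtr_ge0. Qed.

Lemma nrm2_sq f : nrm f ^+ 2 = ip f f.
Proof.
rewrite /nrm2 sqr_sqrtr; last by apply: Rintegral_ge0 => x _; exact: sqr_ge0.
by rewrite /ip2; apply: eq_Rintegral => x _; rewrite expr2.
Qed.

Lemma ip2_ge0 f : 0 <= ip f f.
Proof. by rewrite -nrm2_sq sqr_ge0. Qed.

Lemma L2Z (a : R) f : L2 f -> L2 (fun x => a * f x).
Proof.
move=> [mf iff]; split; first by apply: measurable_funM.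
apply: (eq_integrable mO _ _ _ (integrableZl mO (a ^+ 2) iff)).
by move=> x _ /=; rewrite -EFinM exprMn.
Qed.

Lemma L2_comb (a b : R) f g : L2 f -> L2 g -> L2 (fun x => a * f x + b * g x).
Proof. by move=> Lf Lg; apply: L2_lin => //; exact: L2Z. Qed.

Lemma L2B f g : L2 f -> L2 g -> L2 (fun x => f x - g x).
Proof.
move=> Lf Lg; have := L2_comb 1 (-1) Lf Lg.
by congr L2; apply: funext => x; rewrite mul1r mulN1r.
Qed.

Lemma ip2Z (a : R) f g : L2 f -> L2 g -> ip (fun x => a * f x) g = a * ip f g.
Proof.
move=> Lf Lg; rewrite /ip2 -RintegralZl //; last exact: int_mul.
by apply: eq_Rintegral => x _; rewrite mulrA.
Qed.

Lemma ip2_lin2 (a b : R) f g h : L2 f -> L2 g -> L2 h ->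
  ip (fun x => a * f x + b * g x) h = a * ip f h + b * ip g h.
Proof.
move=> Lf Lg Lh; rewrite ip2_lin //; last exact: L2Z.
by rewrite ip2Z.
Qed.

Lemma ip2_comb (a b c e : R) f g : L2 f -> L2 g ->
  ip (fun x => a * f x + b * g x) (fun x => c * f x + e * g x) =
  a * c * ip f f + (a * e + b * c) * ip f g + b * e * ip g g.
Proof.
move=> Lf Lg; rewrite ip2_lin2 //; last exact: L2_comb.
rewrite (ip2C f) (ip2C g) !ip2_lin2 // (ip2C g f); ring.
Qed.

Lemma ip2B f g h : L2 f -> L2 g -> L2 h ->
  ip (fun x => f x - g x) h = ip f h - ip g h.
Proof.
move=> Lf Lg Lh; have := ip2_lin2 1 (-1) Lf Lg Lh.
rewrite (_ : (fun x => 1 * f x + -1 * g x) = (fun x => f x - g x)); last first.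
  by apply: funext => x; rewrite mul1r mulN1r.
by move=> ->; ring.
Qed.

Lemma ip2Br f g h : L2 f -> L2 g -> L2 h ->
  ip h (fun x => f x - g x) = ip h f - ip h g.
Proof. by move=> *; rewrite ip2C ip2B // (ip2C f) (ip2C g). Qed.

End L2lemmas.

Lemma small_t {R : realType} (a b : R) :
  (forall t : R, 0 < t -> t <= 1 -> a <= t * b) -> a <= 0.
Proof.
move=> H; rewrite leNgt; apply/negP => a0.
have ab : a <= b by have := H 1 ltr01 (lexx _); rewrite mul1r.
have b0 : 0 < b by apply: lt_le_trans ab.
have t0 : 0 < a / (2 * b) by rewrite divr_gt0 // mulr_gt0.
have t1 : a / (2 * b) <= 1.
  by rewrite ler_pdivrMr ?mulr_gt0 // mul1r; lra.
have := H _ t0 t1.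
rewrite (_ : a / (2 * b) * b = a / 2); last by field; rewrite gt_eqF.
lra.
Qed.

Section Yfacts.
Context {R : realType} {Y : normedModType R} (ip : Y -> Y -> R)
  (hip : inner_product_of ip).

Lemma ipY_lin (a : R) x y z : ip (a *: x + y) z = a * ip x z + ip y z.
Proof. by case: hip => _ [H _]; exact: H. Qed.
Lemma ipYC x y : ip x y = ip y x.
Proof. by case: hip => H _; exact: H. Qed.
Lemma ipY_sq x : ip x x = `|x| ^+ 2.
Proof. by case: hip => _ [_ H]; exact: H. Qed.

Lemma ipY0l z : ip 0 z = 0.
Proof.
have := ipY_lin 1 0 0 z; rewrite scaler0 addr0 mul1r => H; lra.
Qed.
Lemma ipYZl (a : R) x z : ip (a *: x) z = a * ip x z.
Proof. by have := ipY_lin a x 0 z; rewrite addr0 ipY0l addr0. Qed.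
Lemma ipYDl x y z : ip (x + y) z = ip x z + ip y z.
Proof. by have := ipY_lin 1 x y z; rewrite scale1r mul1r. Qed.
Lemma ipYNl x z : ip (- x) z = - ip x z.
Proof. by rewrite -scaleN1r ipYZl mulN1r. Qed.
Lemma ipYBl x y z : ip (x - y) z = ip x z - ip y z.
Proof. by rewrite ipYDl ipYNl. Qed.
Lemma ipY0r z : ip z 0 = 0.
Proof. by rewrite ipYC ipY0l. Qed.
Lemma ipYZr (a : R) x z : ip z (a *: x) = a * ip z x.
Proof. by rewrite ipYC ipYZl ipYC. Qed.
Lemma ipYDr x y z : ip z (x + y) = ip z x + ip z y.
Proof. by rewrite ipYC ipYDl !(ipYC z). Qed.
Lemma ipYNr x z : ip z (- x) = - ip z x.
Proof. by rewrite ipYC ipYNl ipYC. Qed.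
Lemma ipYBr x y z : ip z (x - y) = ip z x - ip z y.
Proof. by rewrite ipYDr ipYNr. Qed.

Lemma ipY_le x y : ip x y <= `|x| * `|y|.
Proof.
have [x0|xn0] := eqVneq x 0; first by rewrite x0 ipY0l normr0 mul0r.
have [y0|yn0] := eqVneq y 0; first by rewrite y0 ipY0r normr0 mulr0.
have ax : 0 < `|x| by rewrite normr_gt0.
have ay : 0 < `|y| by rewrite normr_gt0.
have H0 := sqr_ge0 (Num.norm (`|y| *: x - `|x| *: y)).
rewrite -ipY_sq !(ipYBl, ipYBr, ipYZl, ipYZr) (ipYC y x) !ipY_sq in H0.
have : 0 <= `|x| * `|y| * (2 * (`|x| * `|y| - ip x y)).
  by move: H0; congr (_ <= _); ring.
rewrite pmulr_rge0 ?mulr_gt0 //; lra.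
Qed.

Lemma ipY_expand (t : R) x y :
  `|x + t *: y| ^+ 2 = `|x| ^+ 2 + 2 * t * ip x y + t ^+ 2 * `|y| ^+ 2.
Proof.
rewrite -!ipY_sq ipYDl !ipYDr !ipYZl !ipYZr (ipYC y x); ring.
Qed.

Lemma ipY_ge x y : - (`|x| * `|y|) <= ip x y.
Proof. by have := ipY_le x (- y); rewrite ipYNr normrN; lra. Qed.

End Yfacts.



Section More.
Context {d : measure_display} {T : measurableType d} {R : realType}.
Variables (mu : {measure set T -> \bar R}) (Omega : set T).
Hypothesis mO : measurable Omega.

Local Notation L2 := (L2 mu Omega).
Local Notation ip := (ip2 mu Omega).
Local Notation nrm := (nrm2 mu Omega).

Lemma nrm2_comb_sq (a b : R) f g : L2 f -> L2 g ->
  nrm (fun x => a * f x + b * g x) ^+ 2 =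
  a * a * ip f f + (a * b + b * a) * ip f g + b * b * ip g g.
Proof. by move=> Lf Lg; rewrite nrm2_sq ip2_comb. Qed.

Lemma proj_VI (U : (T -> R) -> Prop) P :
  is_L2proj mu Omega U P -> (forall q, U q -> L2 q) ->
  (forall p q t, U p -> U q -> 0 < t -> t <= 1 ->
     U (fun x => p x + t * (q x - p x))) ->
  forall v q, L2 v -> U q ->
  ip (fun x => v x - P v x) (fun x => q x - P v x) <= 0.
Proof.
move=> hP UL convU v q Lv Uq; have [UPv Hmin] := hP v Lv.
have LF : L2 (fun x => v x - P v x) by apply: L2B => //; exact: UL.
have LG : L2 (fun x => q x - P v x) by apply: L2B => //; apply: UL.
apply: (@small_t _ _ (ip (fun x => q x - P v x) (fun x => q x - P v x) / 2)).
move=> t t0 t1; have := Hmin _ (convU _ _ t UPv Uq t0 t1).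
rewrite (_ : (fun x => v x - (P v x + t * (q x - P v x))) =
   (fun x => 1 * (v x - P v x) + (- t) * (q x - P v x))); last first.
  by apply: funext => x; ring.
move=> H.
have H2 : nrm (fun x => v x - P v x) ^+ 2 <=
   nrm (fun x => 1 * (v x - P v x) + (- t) * (q x - P v x)) ^+ 2.
  have := nrm2_ge0 mu Omega (fun x => v x - P v x); nra.
rewrite nrm2_comb_sq // nrm2_sq in H2.
move: H2.
set a := ip (fun x => v x - P v x) (fun x => q x - P v x).
set b := ip (fun x => q x - P v x) (fun x => q x - P v x).
set c := ip (fun x => v x - P v x) (fun x => v x - P v x).
move=> H2.
have : t * (2 * a - t * b) <= 0 by nra.
rewrite pmulr_rle0 //; lra.
Qed.

Lemma Uad_L2 ua ub u : Uad mu Omega ua ub u -> L2 u.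
Proof. by case. Qed.

Lemma Uad_conv ua ub p q t : Uad mu Omega ua ub p -> Uad mu Omega ua ub q ->
  0 <= t -> t <= 1 -> Uad mu Omega ua ub (fun x => p x + t * (q x - p x)).
Proof.
move=> [Lp Hp] [Lq Hq] t0 t1; split.
  have := L2_comb mO (1 - t) t Lp Lq; congr L2.
  by apply: funext => x; ring.
move: Hp Hq; apply: filterS2 => x Hpx Hqx Ox.
have /andP[h1 h2] := Hpx Ox; have /andP[h3 h4] := Hqx Ox.
by apply/andP; split; nra.
Qed.

Lemma Rintegral_ae F G : measurable_fun Omega F -> measurable_fun Omega G ->
  {ae mu, forall x, Omega x -> F x = G x} ->
  Rintegral mu Omega F = Rintegral mu Omega G.
Proof.
move=> mF mG H; rewrite /Rintegral; congr fine.
apply: ae_eq_integral => //; try exact/measurable_EFinP.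
by move: H; apply: filterS => x H Ox /=; rewrite H.
Qed.

Lemma Uad_bound ua ub : Linf mu Omega ua -> Linf mu Omega ub ->
  (mu Omega < +oo)%E ->
  exists B : R, 0 <= B /\ forall u, Uad mu Omega ua ub u -> nrm u <= B.
Proof.
move=> [_ [Ma Ha]] [_ [Mb Hb]] Ofin.
set M := `|Ma| + `|Mb|.
set m := fine (mu Omega).
have m0 : 0 <= m by apply: fine_ge0.
exists (M ^+ 2 * m + 1); split; first by rewrite addr_ge0 // mulr_ge0 // sqr_ge0.
move=> u [[mu' iu] Hu].
suff H : Rintegral mu Omega (fun x => u x ^+ 2) <= M ^+ 2 * m.
  have H0 : 0 <= Rintegral mu Omega (fun x => u x ^+ 2).
    by apply: Rintegral_ge0 => x _; exact: sqr_ge0.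
  have := nrm2_ge0 mu Omega u.
  have : nrm u ^+ 2 = Rintegral mu Omega (fun x => u x ^+ 2).
    by rewrite nrm2_sq /ip2; apply: eq_Rintegral => x _; rewrite expr2.
  nra.
have fin1 : (\int[mu]_(x in Omega) (u x ^+ 2)%:E)%E \is a fin_num.
  by have := integrable_fin_num mO iu.
have finm : mu Omega \is a fin_num by rewrite ge0_fin_numE.
rewrite /Rintegral -lee_fin fineK //.
apply: (@le_trans _ _ (\int[mu]_(x in Omega) (cst (M ^+ 2)%:E) x)%E).
  apply: ae_ge0_le_integral => //.
  - by move=> x _; rewrite lee_fin sqr_ge0.
  - by apply/measurable_EFinP; apply: measurable_funX.
  - by move=> x _; rewrite lee_fin sqr_ge0.
  - move: Ha Hb Hu; apply: filterS3 => x ha hb hu Ox.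
    have /andP[h1 h2] := hu Ox; have a1 := ha Ox; have b1 := hb Ox.
    rewrite lee_fin.
    have Hx : `|u x| <= M.
      rewrite /M ler_norml; apply/andP; split.
        have := ler_norm (ua x); have := ler_normr Ma ; rewrite /=.
        have := normr_ge0 Mb; have := normr_ge0 Ma; rewrite ler_norml in a1.
        case/andP: a1 => a1 a2.  have := ler_norm Ma. nra.
      have := ler_norm (ub x); rewrite ler_norml in b1.
      case/andP: b1 => b1 b2. have := ler_norm Mb. have := normr_ge0 Ma. nra.
    rewrite -(real_normK (num_real (u x))).
    have := normr_ge0 (u x); nra.
by rewrite integral_cst // -[X in (_ * X)%E](fineK finm) -EFinM.
Qed.

Lemma nrm2_add_le f g : L2 f -> L2 g ->
  nrm (fun x => f x + g x) ^+ 2 <= 2 * nrm f ^+ 2 + 2 * nrm g ^+ 2.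
Proof.
move=> Lf Lg.
have E : (fun x => f x + g x) = (fun x => 1 * f x + 1 * g x).
  by apply: funext => x; rewrite !mul1r.
have H1 := nrm2_comb_sq 1 (-1) Lf Lg.
have H2 := nrm2_comb_sq 1 1 Lf Lg.
have H3 := sqr_ge0 (nrm (fun x => 1 * f x + -1 * g x)).
rewrite E H2 !nrm2_sq; lra.
Qed.

End More.

Lemma zmod_swap {V : zmodType} (x1 x2 y1 y2 : V) :
  (x1 - x2) - (y1 - y2) = (x1 - y1) - (x2 - y2).
Proof. by rewrite !opprD !opprK addrACA. Qed.

Lemma zmod_chain {V : zmodType} (x y z : V) : (x - y) + (y - z) = x - z.
Proof. by rewrite addrA subrK. Qed.

Lemma zmod_rearr {V : zmodType} (z a u s : V) :
  z - s = (z - a) - (u - a) - (s - u).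
Proof.
by rewrite (zmod_swap z a u a) subrr subr0 (zmod_swap z u s u) subrr subr0.
Qed.


Section Lin.
Context {d : measure_display} {T : measurableType d} {R : realType}.
Context {Y : normedModType R}.
Variables (mu : {measure set T -> \bar R}) (Omega : set T).
Hypothesis mO : measurable Omega.
Local Notation L2 := (L2 mu Omega).

Lemma linB (A : (T -> R) -> Y) f g : lin_cont mu Omega A -> L2 f -> L2 g ->
  A (fun x => f x - g x) = A f - A g.
Proof.
move=> [HA _] Lf Lg; have := HA (-1) g f Lg Lf.
rewrite scaleN1r addrC => <-; congr A; apply: funext => x; ring.
Qed.

Lemma linC (A : (T -> R) -> Y) p q t : lin_cont mu Omega A -> L2 p -> L2 q ->
  A (fun x => p x + t * (q x - p x)) = A p + t *: (A q - A p).
Proof.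
move=> hA Lp Lq; have [HA _] := hA.
have := HA t _ _ (L2B mO Lq Lp) Lp; rewrite linB // addrC => <-.
by congr A; apply: funext => x; ring.
Qed.

End Lin.

Section Seqs.
Context {R : realType}.

Lemma sum_norm_bound {Y : normedModType R} (alpha : nat -> R) (F : nat -> Y)
  (X : R) k :
  (forall i, (0 < i)%N -> 0 < alpha i) -> (forall i, (0 < i)%N -> `|F i| <= X) ->
  `|\sum_(1 <= i < k.+1) (alpha i)^-1 *: F i| <= gam alpha k * X.
Proof.
move=> ha hF; rewrite /gam mulr_suml.
apply: (le_trans (ler_norm_sum _ _ _)); apply: ler_sum_nat => i /andP[i1 _].
rewrite normrZ gtr0_norm ?invr_gt0 ?ha //; apply: ler_wpM2l.
  by rewrite invr_ge0 ltW ?ha.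
exact: hF.
Qed.

Lemma gamS (alpha : nat -> R) k : gam alpha k.+1 = gam alpha k + (alpha k.+1)^-1.
Proof. by rewrite /gam big_nat_recr. Qed.

Lemma gam_ge0 (alpha : nat -> R) k : (forall i, (0 < i)%N -> 0 < alpha i) ->
  0 <= gam alpha k.
Proof.
move=> ha; elim: k => [|k IH]; first by rewrite /gam big_geq.
by rewrite gamS addr_ge0 // invr_ge0 ltW ?ha.
Qed.

Lemma rho_ge0 (alpha : nat -> R) k : 0 <= rho alpha k.
Proof. exact: sqrtr_ge0. Qed.

Lemma rho_ge (alpha : nat -> R) k : 0 < alpha k -> (alpha k)^-1 <= rho alpha k.
Proof.
move=> a0; have ai0 : 0 < (alpha k)^-1 by rewrite invr_gt0.
have H : (alpha k)^-1 ^+ 2 <= (alpha k)^-1 * (1 + (alpha k)^-1) by nra.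
have H2 := ler_wsqrtr H; rewrite sqrtr_sqr ger0_norm in H2; last exact: ltW.
exact: H2.
Qed.

Lemma Rterm_ge0 (alpha eps : nat -> R) i : (forall i, (0 < i)%N -> 0 < alpha i) ->
  0 < alpha i -> 0 <= eps i -> 0 <= Rterm alpha eps i.
Proof.
move=> ha a0 e0; have ai0 : 0 <= (alpha i)^-1 by rewrite invr_ge0 ltW.
have g0 := gam_ge0 i.-1 ha.
rewrite /Rterm; repeat apply: addr_ge0; repeat apply: divr_ge0;
  repeat apply: mulr_ge0; rewrite ?exprn_ge0 //; exact: ltW.
Qed.

Lemma Hterm_ge0 (alpha : nat -> R) dl i : (forall i, (0 < i)%N -> 0 < alpha i) ->
  0 < alpha i -> 0 <= dl -> 0 <= Hterm alpha dl i.
Proof.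
move=> ha a0 e0; have ai0 : 0 <= (alpha i)^-1 by rewrite invr_ge0 ltW.
have g0 := gam_ge0 i.-1 ha; have r0 := rho_ge0 alpha i.
rewrite /Hterm; apply: addr_ge0; apply: mulr_ge0; rewrite ?exprn_ge0 //;
  repeat apply: addr_ge0; repeat apply: divr_ge0;
  repeat apply: mulr_ge0; rewrite ?exprn_ge0 //; exact: ltW.
Qed.

End Seqs.

Section Arith.
Context {R : realType}.

Lemma arith_step (ai gk dl ep eta rh CS B Z w0 Rk Hk : R) :
  0 < ai -> 0 <= gk -> 0 <= dl -> 0 < ep -> 0 <= eta -> ai <= rh ->
  0 <= CS -> 0 <= B -> 0 <= Z -> 0 <= w0 ->
  eta <= ep -> ai * eta <= ep ->
  ep * ai + gk * ep * ai + ep ^+ 2 * ai <= Rk ->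
  dl * rh * ai + dl * gk * ai <= Hk ->
  2 * (ai * ((2 * dl) * ((gk + ai) * Z) + (2 * CS * B) * ((gk + ai) * dl)
        + (CS * eta) * (w0 + (gk + ai) * (2 * CS * B))))
  + 2 * (ai * eta ^+ 2)
  <= (4 * Z + 4 * CS * B) * Hk + (2 * CS * w0 + 4 * CS ^+ 2 * B + 2) * Rk.
Proof.
move=> ai0 gk0 dl0 ep0 eta0 rhai CS0 B0 Z0 w00 etae aietae HR HH.
have ai0' := ltW ai0; have ep0' := ltW ep0.
have Q1 : ai * (gk + ai) * dl <= Hk.
  have : dl * (ai * ai) <= dl * (rh * ai).
    by apply: ler_wpM2l => //; apply: ler_wpM2r.
  have := mulr_ge0 gk0 ai0'; lra.
have R1 := mulr_ge0 (mulr_ge0 gk0 ep0') ai0'.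
have R2 := mulr_ge0 (exprn_ge0 2 ep0') ai0'.
have R3 := mulr_ge0 ep0' ai0'.
have Q2' : ai * eta <= ai * ep by apply: ler_wpM2l.
have Q2 : ai * eta <= Rk by lra.
have Q3 : ai * (gk + ai) * eta <= Rk.
  have : gk * (ai * eta) <= gk * (ai * ep) by apply: ler_wpM2l.
  have : ai * (ai * eta) <= ai * ep by apply: ler_wpM2l.
  lra.
have Q4 : ai * eta ^+ 2 <= Rk.
  have h2 : eta ^+ 2 <= ep ^+ 2 by rewrite ler_sqr ?nnegrE.
  have : ai * eta ^+ 2 <= ai * ep ^+ 2 by apply: ler_wpM2l.
  lra.
have E2 : 2 * (ai * ((2 * dl) * ((gk + ai) * Z) + (2 * CS * B) * ((gk + ai) * dl)
        + (CS * eta) * (w0 + (gk + ai) * (2 * CS * B))))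
  + 2 * (ai * eta ^+ 2) =
     (4 * Z + 4 * CS * B) * (ai * (gk + ai) * dl) + (2 * CS * w0) * (ai * eta)
     + (4 * CS ^+ 2 * B) * (ai * (gk + ai) * eta) + 2 * (ai * eta ^+ 2).
  by ring.
rewrite E2.
have C10 : 0 <= 4 * Z + 4 * CS * B by rewrite addr_ge0 ?mulr_ge0.
have := ler_wpM2l C10 Q1.
have := ler_wpM2l (mulr_ge0 (mulr_ge0 (ler0n _ 2) CS0) w00) Q2.
have := ler_wpM2l (mulr_ge0 (mulr_ge0 (ler0n _ 4) (exprn_ge0 2 CS0)) B0) Q3.
lra.
Qed.

End Arith.

Lemma Rterm_lb {R : realType} (alpha eps : nat -> R) k :
  (forall i, (0 < i)%N -> 0 < alpha i) -> 0 < eps k.+1 ->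
  eps k.+1 * (alpha k.+1)^-1 + gam alpha k * eps k.+1 * (alpha k.+1)^-1
  + eps k.+1 ^+ 2 * (alpha k.+1)^-1 <= Rterm alpha eps k.+1.
Proof.
move=> ha e0; rewrite /Rterm (_ : k.+1.-1 = k) //.
have : 0 <= eps k.+1 ^+ 2 / alpha k.+1 ^+ 2.
  by rewrite divr_ge0 ?exprn_ge0 // ltW // ha.
lra.
Qed.

Lemma Hterm_lb {R : realType} (alpha : nat -> R) dl k :
  (forall i, (0 < i)%N -> 0 < alpha i) -> 0 <= dl ->
  dl * rho alpha k.+1 * (alpha k.+1)^-1 + dl * gam alpha k * (alpha k.+1)^-1
  <= Hterm alpha dl k.+1.
Proof.
move=> ha dl0; rewrite /Hterm (_ : k.+1.-1 = k) //.
have a0 : 0 <= alpha k.+1 by rewrite ltW // ha.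
have ai0 : 0 <= (alpha k.+1)^-1 by rewrite invr_ge0.
have g0 := gam_ge0 k ha; have r0 := rho_ge0 alpha k.+1.
have : 0 <= dl * (gam alpha k * rho alpha k.+1 * (alpha k.+1)^-1) +
   dl ^+ 2 * (rho alpha k.+1 ^+ 2 / alpha k.+1 ^+ 2
              + rho alpha k.+1 ^+ 2 * (alpha k.+1)^-1).
  by rewrite addr_ge0 ?mulr_ge0 ?exprn_ge0 ?addr_ge0 ?divr_ge0 ?exprn_ge0 ?mulr_ge0.
lra.
Qed.

Lemma final_arith {R : realType} (L cw W C1 C2 SR SH : R) :
  0 <= W -> 0 <= C1 -> 0 <= C2 -> 0 <= SR -> 0 <= SH -> 0 <= cw ->
  L + cw <= W + (C1 * SH + C2 * SR) ->
  L <= (W + C1 + C2 + 1) * (1 + SR + SH).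
Proof.
move=> W0 C10 C20 SR0 SH0 cw0 H.
have h1 : C2 * SR <= (W + C1 + C2 + 1) * SR by apply: ler_wpM2r => //; lra.
have h2 : C1 * SH <= (W + C1 + C2 + 1) * SH by apply: ler_wpM2r => //; lra.
lra.
Qed.

Lemma acc_arith {R : realType} (L a cw cw' W S s : R) :
  L + cw <= W + S -> a + cw' <= cw + s -> (L + a) + cw' <= W + (S + s).
Proof. lra. Qed.

Unset Implicit Arguments.
Set Strict Implicit.

Theorem theorem4p1
  (d : measure_display) (T : measurableType d) (R : realType)
  (mu : {measure set T -> \bar R}) (Omega : set T)
  (hOm : measurable Omega) (hOmfin : (mu Omega < +oo)%E)
  (Y : completeNormedModType R) (ipY : Y -> Y -> R)
  (hipY : inner_product_of ipY)
  (S : (T -> R) -> Y) (hS : lin_cont mu Omega S)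
  (Sstar : Y -> (T -> R)) (hSstar : is_adjoint mu Omega ipY S Sstar)
  (z : Y) (ua ub : T -> R)
  (hua : Linf mu Omega ua) (hub : Linf mu Omega ub)
  (hab : {ae mu, forall x, Omega x -> ua x <= ub x})
  (P : (T -> R) -> (T -> R)) (hP : is_L2proj mu Omega (Uad mu Omega ua ub) P)
  (Sh : R -> (T -> R) -> Y) (Shstar : R -> Y -> (T -> R))
  (hSh : forall h, 0 <= h ->
     lin_cont mu Omega (Sh h) /\ is_adjoint mu Omega ipY (Sh h) (Shstar h))
  (hShfin : forall h, 0 < h -> finite_range mu Omega (Sh h))
  (delta : R -> R) (hdelta0 : delta 0 = 0)
  (hdelta_pos : forall h, 0 <= h -> 0 <= delta h)
  (hdelta_mono : forall h1 h2, 0 <= h1 -> h1 <= h2 -> delta h1 <= delta h2)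
  (hdelta_cont : {within [set x : R | 0 <= x], continuous delta})
  (hdelta : forall (h : R) (uh : T -> R), 0 <= h -> Uad mu Omega ua ub uh ->
     `|S uh - Sh h uh|
     + nrm2 mu Omega (fun x => Sstar (Sh h uh - z) x - Shstar h (Sh h uh - z) x)
     <= delta h)
  (alpha : nat -> R) (halpha : forall k, (0 < k)%N -> 0 < alpha k)
  (halpha_bnd : exists M : R, forall k, (0 < k)%N -> alpha k <= M)
  (udag : T -> R)
  (hudag : Uad mu Omega ua ub udag /\
     forall v, Uad mu Omega ua ub v ->
       2^-1 * `|S udag - z| ^+ 2 <= 2^-1 * `|S v - z| ^+ 2)
  (hsource : exists w : Y, {ae mu, forall x, Omega x -> udag x = P (Sstar w) x})
  (eps : nat -> R) (heps : forall k, (0 < k)%N -> 0 < eps k)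
  (h : R) (hh : 0 < h)
  (u : nat -> T -> R)
  (hu : inexact_bregman mu Omega P (Sh h) (Shstar h) z (Uad mu Omega ua ub)
          alpha eps u) :
  exists c : R, 0 < c /\
    forall k : nat,
      \sum_(1 <= i < k.+1) (alpha i)^-1 * (nrm2 mu Omega (fun x => u i x - udag x)) ^+ 2
      <= c * (1 + \sum_(1 <= i < k.+1) Rterm alpha eps i
                + \sum_(1 <= i < k.+1) Hterm alpha (delta h) i).
Proof.
have [linA adjA] := hSh h (ltW hh).
set A := Sh h in hu linA adjA hdelta.
set As := Shstar h in hu adjA.
set U := Uad mu Omega ua ub in hP hdelta hudag hu.
have UL : forall q, U q -> L2 mu Omega q by move=> q [].
have convU : forall p q t, U p -> U q -> 0 < t -> t <= 1 ->
    U (fun x => p x + t * (q x - p x)).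
  by move=> p q t Up Uq t0 t1; apply: (Uad_conv hOm) => //; exact: ltW.
have [B [B0 HB]] := Uad_bound hOm hua hub hOmfin.
have [_ [C0 HC]] := hS.
set CS := `|C0|.
have CS0 : 0 <= CS by exact: normr_ge0.
have HSb : forall f, L2 mu Omega f -> `|S f| <= CS * nrm2 mu Omega f.
  move=> f Lf; apply: (le_trans (HC f Lf)); apply: ler_wpM2r.
    exact: nrm2_ge0.
  exact: ler_norm.
set dl := delta h.
have dl0 : 0 <= dl by apply: hdelta_pos; exact: ltW.
have HdS : forall v, U v -> `|A v - S v| <= dl.
  move=> v Uv; have := hdelta h v (ltW hh) Uv; rewrite -/A -/As -/dl => H1.
  have := nrm2_ge0 mu Omega (fun x => Sstar (A v - z) x - As (A v - z) x).
  rewrite distrC; lra.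
case: hsource => w Hw.
have LSw : L2 mu Omega (Sstar w) by case: (hSstar w).
set pd := P (Sstar w).
have Upd : U pd by case: (hP _ LSw).
have [Uud Hopt] := hudag.
have Lud := UL _ Uud; have Lpd := UL _ Upd.
have Hn0 : nrm2 mu Omega (fun x => udag x - pd x) = 0.
  rewrite /nrm2 (@Rintegral_ae _ _ _ mu Omega hOm _ (fun _ => 0)).
  - by rewrite Rintegral_cst // mul0r sqrtr0.
  - by apply: measurable_funX; case: (L2B hOm Lud Lpd).
  - exact: measurable_cst.
  - by move: Hw; apply: filterS => x H Ox; rewrite H // subrr expr0n.
have Hsame : S udag = S pd.
  apply/eqP; rewrite -subr_eq0 -normr_eq0 eq_le normr_ge0 andbT.
  by rewrite -(linB hS Lud Lpd) (le_trans (HSb _ (L2B hOm Lud Lpd))) // Hn0 mulr0.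
have HLHS : forall f, L2 mu Omega f ->
    nrm2 mu Omega (fun x => f x - udag x) = nrm2 mu Omega (fun x => f x - pd x).
  move=> f Lf; rewrite /nrm2; congr Num.sqrt.
  apply: Rintegral_ae => //.
  - by apply: measurable_funX; case: (L2B hOm Lf Lud).
  - by apply: measurable_funX; case: (L2B hOm Lf Lpd).
  - by move: Hw; apply: filterS => x H Ox; rewrite H.
set r := z - S pd.
have Hopt' : forall q, U q -> ipY (S q - S pd) r <= 0.
  move=> q Uq; have Lq := UL _ Uq.
  apply: (@small_t _ _ (`|S q - S pd| ^+ 2 / 2)) => t t0 t1.
  have := Hopt _ (convU _ _ t Upd Uq t0 t1).
  rewrite Hsame (linC hOm t hS Lpd Lq).
  set D := S q - S pd.
  have -> : S pd + t *: D - z = - r + t *: D by rewrite /r opprB addrAC.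
  rewrite (ipY_expand hipY) normrN (ipYNl hipY) (ipYC hipY r D).
  have -> : S pd - z = - r by rewrite /r opprB.
  rewrite normrN => H.
  have : t * (2 * ipY D r - t * `|D| ^+ 2) <= 0 by lra.
  rewrite pmulr_rle0 //; lra.
have Hsrc : forall q, U q ->
    ipY (S q - S pd) w <= ip2 mu Omega pd (fun x => q x - pd x).
  move=> q Uq; have Lq := UL _ Uq.
  have := proj_VI hOm hP UL convU LSw Uq.
  rewrite ip2B //; last exact: L2B.
  have [_ Hadj] := hSstar w; rewrite Hadj; last exact: L2B.
  by rewrite (linB hS Lq Lpd); lra.
have [hu0 huk] := hu.
set lam := lam_in A As z alpha u.
set muk := fun k => \sum_(1 <= i < k.+1) (alpha i)^-1 *: (z - A (u i)).
have lamS : forall k, lam k.+1 =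
    (fun x => (alpha k.+1)^-1 * As (z - A (u k.+1)) x + lam k x).
  by move=> k; apply: funext => x; rewrite /lam /lam_in big_nat_recr //= addrC.
have LAs : forall y, L2 mu Omega (As y) by move=> y; case: (adjA y).
have lamP : forall k, L2 mu Omega (lam k) /\
    forall g, L2 mu Omega g -> ip2 mu Omega (lam k) g = ipY (A g) (muk k).
  elim=> [|k [IHL IHip]].
    have E0 : lam 0%N = (fun _ => 0).
      by apply: funext => x; rewrite /lam /lam_in big_geq.
    rewrite E0 /muk /= big_geq //; split.
      have := L2B hOm Lpd Lpd; congr L2; apply: funext => x; exact: subrr.
    move=> g Lg; rewrite (ipY0r hipY) /ip2 (_ : Rintegral mu Omega (fun x => 0 * g x) =
       Rintegral mu Omega (fun _ => 0)).
      by rewrite Rintegral_cst // mul0r.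
    by apply: eq_Rintegral => x _; rewrite mul0r.
  rewrite lamS; split; first exact: (L2_lin hOm _ (LAs _) IHL).
  move=> g Lg; rewrite ip2_lin // IHip //.
  have [_ Hadj] := adjA (z - A (u k.+1)); rewrite Hadj //.
  rewrite /muk /= [in RHS]big_nat_recr //= [in RHS](ipYDr hipY) (ipYZr hipY); ring.
have ha : forall i, (0 < i)%N -> 0 < alpha i := halpha.
set bk := fun k => \sum_(1 <= i < k.+1) (alpha i)^-1 *: (S (u i) - S pd).
set Ek := fun k => \sum_(1 <= i < k.+1) (alpha i)^-1 *: (A (u i) - S (u i)).
set ck := fun k => bk k + w.
have Hmu : forall k, muk k = gam alpha k *: r - bk k - Ek k.
  move=> k; rewrite /muk /bk /Ek /gam scaler_suml -!sumrB.
  apply: eq_bigr => i _; rewrite -!scalerBr; congr (_ *: _).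
  by rewrite /r (zmod_rearr z (S pd) (S (u i)) (A (u i))).
have HSu : forall v, U v -> `|S v| <= CS * B.
  move=> v Uv; apply: (le_trans (HSb _ (UL _ Uv))); apply: ler_wpM2l => //.
  exact: HB.
set Z := `|z| + CS * B + dl.
have HAu : forall v, U v -> `|z - A v| <= Z.
  move=> v Uv; apply: (le_trans (ler_normB _ _)).
  have : `|A v| <= `|S v| + dl.
    have -> : A v = (A v - S v) + S v by rewrite subrK.
    apply: (le_trans (ler_normD _ _)); have := HdS v Uv; lra.
  have := HSu v Uv; rewrite /Z; lra.
have hmuk : forall k, `|muk k| <= gam alpha k * Z.
  move=> k; apply: sum_norm_bound => // i i0; exact: HAu (proj1 (huk i i0)).
have hbk : forall k, `|bk k| <= gam alpha k * (2 * CS * B).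
  move=> k; apply: sum_norm_bound => // i i0.
  apply: (le_trans (ler_normB _ _)).
  have := HSu _ (proj1 (huk i i0)); have := HSu _ Upd; lra.
have hEk : forall k, `|Ek k| <= gam alpha k * dl.
  move=> k; apply: sum_norm_bound => // i i0.
  exact: HdS (proj1 (huk i i0)).
have hck : forall k, `|ck k| <= `|w| + gam alpha k * (2 * CS * B).
  move=> k; apply: (le_trans (ler_normD _ _)); have := hbk k; rewrite addrC; lra.
have ckS : forall k, ck k.+1 = ck k + (alpha k.+1)^-1 *: (S (u k.+1) - S pd).
  by move=> k; rewrite /ck /bk /= big_nat_recr //= addrAC.
have ck0 : ck 0%N = w by rewrite /ck /bk /= big_geq // add0r.
set C1 := 4 * Z + 4 * CS * B.
set C2 := 2 * CS * `|w| + 4 * CS ^+ 2 * B + 2.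
have Z0 : 0 <= Z by rewrite /Z !addr_ge0 ?mulr_ge0.
have C10 : 0 <= C1 by rewrite /C1 addr_ge0 ?mulr_ge0.
have C20 : 0 <= C2 by rewrite /C2 !addr_ge0 ?mulr_ge0 ?exprn_ge0.
have step : forall k,
    (alpha k.+1)^-1 * nrm2 mu Omega (fun x => u k.+1 x - pd x) ^+ 2
    + `|ck k.+1| ^+ 2
    <= `|ck k| ^+ 2 + (C1 * Hterm alpha dl k.+1 + C2 * Rterm alpha eps k.+1).
  move=> k.
  have [Uj Bj] := huk k.+1 isT; have Lj := UL _ Uj.
  have [Lv Hv] := lamP k.+1.
  have Bj' : (1 + (alpha k.+1)^-1) *
      nrm2 mu Omega (fun x => u k.+1 x - P (lam k.+1) x) <= eps k.+1.
    by move: Bj; rewrite /Bres lamS.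
  set v := lam k.+1 in Lv Hv Bj'.
  set p := P v in Bj'.
  have [Up _] := hP v Lv; have Lp := UL _ Up.
  set eta := nrm2 mu Omega (fun x => u k.+1 x - p x) in Bj'.
  have eta0 : 0 <= eta by exact: nrm2_ge0.
  set ai := (alpha k.+1)^-1 in Bj' *.
  have ai0 : 0 < ai by rewrite invr_gt0 ha.
  set ep := eps k.+1 in Bj' *.
  have ep0 : 0 < ep by apply: heps.
  have etae : eta <= ep by nra.
  have aietae : ai * eta <= ep by nra.
  have H2 := proj_VI hOm hP UL convU Lv Upd.
  rewrite -/p ip2B // ?Hv // in H2; try exact: L2B.
  rewrite (linB linA Lpd Lp) in H2.
  have H1 := Hsrc p Up; have H0 := Hopt' p Up.
  have Hid : ip2 mu Omega p (fun x => pd x - p x) +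
      ip2 mu Omega pd (fun x => p x - pd x) =
      - nrm2 mu Omega (fun x => p x - pd x) ^+ 2.
    rewrite nrm2_sq ip2B //; last exact: L2B.
    rewrite !ip2Br // (ip2C _ _ pd p); ring.
  set gj := gam alpha k.+1.
  have gj0 : 0 <= gj by apply: gam_ge0.
  set M := muk k.+1 in H2.
  set D := S p - S pd in H1 H0.
  set DA := A p - A pd.
  have HgD : gj * ipY D r <= 0 by rewrite mulr_ge0_le0.
  have EN : ipY (A pd - A p) M = - ipY DA M by rewrite -(ipYNl hipY) opprB.
  have Hstar : nrm2 mu Omega (fun x => p x - pd x) ^+ 2 <=
      ipY DA M - ipY D w - gj * ipY D r by lra.
  set c := ck k.+1.
  set e := S (u k.+1) - S pd.
  have eq1 : ipY DA M = ipY (DA - D) M + ipY D M by rewrite (ipYBl hipY DA D M); ring.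
  have eq2 : ipY D M = gj * ipY D r - ipY D (bk k.+1) - ipY D (Ek k.+1).
    by rewrite /M Hmu (ipYBr hipY _ _ D) (ipYBr hipY _ _ D) (ipYZr hipY _ _ D).
  have eq3 : ipY D c = ipY D (bk k.+1) + ipY D w by rewrite /c /ck /= (ipYDr hipY).
  have eqD : D = (S p - S (u k.+1)) + e by rewrite /D /e zmod_chain.
  have eq4 : ipY D c = ipY (S p - S (u k.+1)) c + ipY e c.
    by rewrite {1}eqD (ipYDl hipY).
  have nSp : `|S p| <= CS * B := HSu p Up.
  have nSpd : `|S pd| <= CS * B := HSu pd Upd.
  have nD : `|D| <= 2 * CS * B.
    by apply: (le_trans (ler_normB _ _)); lra.
  have nDA : `|DA - D| <= 2 * dl.
    rewrite /DA /D zmod_swap; apply: (le_trans (ler_normB _ _)).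
    have := HdS p Up; have := HdS pd Upd; lra.
  have nM : `|M| <= gj * Z := hmuk k.+1.
  have nE : `|Ek k.+1| <= gj * dl := hEk k.+1.
  have nc : `|c| <= `|w| + gj * (2 * CS * B) := hck k.+1.
  have nSpu : `|S p - S (u k.+1)| <= CS * eta.
    rewrite distrC -(linB hS Lj Lp); exact: HSb (L2B hOm Lj Lp).
  have T1 : ipY (DA - D) M <= (2 * dl) * (gj * Z).
    apply: (le_trans (ipY_le hipY _ _)); apply: ler_pM => //.
  have T2 : - ipY D (Ek k.+1) <= (2 * CS * B) * (gj * dl).
    have := ipY_ge hipY D (Ek k.+1).
    have : `|D| * `|Ek k.+1| <= (2 * CS * B) * (gj * dl) by apply: ler_pM.
    lra.
  have T3 : - ipY (S p - S (u k.+1)) c <= (CS * eta) * (`|w| + gj * (2 * CS * B)).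
    have := ipY_ge hipY (S p - S (u k.+1)) c.
    have : `|S p - S (u k.+1)| * `|c| <= (CS * eta) * (`|w| + gj * (2 * CS * B)).
      by apply: ler_pM.
    lra.
  have T4 : (`|c| ^+ 2 - `|ck k| ^+ 2) / 2 <= ai * ipY e c.
    have Ec : c = ck k + ai *: e by rewrite /c ckS.
    have : ipY e c = ipY e (ck k) + ai * `|e| ^+ 2.
      by rewrite Ec (ipYDr hipY) (ipYZr hipY) (ipY_sq hipY).
    rewrite Ec (ipY_expand hipY) (ipYC hipY (ck k) e) => ->.
    have := sqr_ge0 (ai * `|e|); rewrite exprMn; lra.
  set X := (2 * dl) * (gj * Z) + (2 * CS * B) * (gj * dl)
           + (CS * eta) * (`|w| + gj * (2 * CS * B)).
  have Hpp : nrm2 mu Omega (fun x => p x - pd x) ^+ 2 <= X - ipY e c.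
    rewrite /X; lra.
  have Hpp' : ai * nrm2 mu Omega (fun x => p x - pd x) ^+ 2 <= ai * X - ai * ipY e c.
    by rewrite -mulrBr; apply: ler_wpM2l => //; exact: ltW.
  have Hup : nrm2 mu Omega (fun x => u k.+1 x - pd x) ^+ 2 <=
      2 * eta ^+ 2 + 2 * nrm2 mu Omega (fun x => p x - pd x) ^+ 2.
    have := nrm2_add_le hOm (L2B hOm Lj Lp) (L2B hOm Lp Lpd).
    rewrite (_ : (fun x => u k.+1 x - p x + (p x - pd x)) =
      (fun x => u k.+1 x - pd x)) //.
    by apply: funext => x; ring.
  have Hup' : ai * nrm2 mu Omega (fun x => u k.+1 x - pd x) ^+ 2 <=
      ai * (2 * eta ^+ 2 + 2 * nrm2 mu Omega (fun x => p x - pd x) ^+ 2).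
    by apply: ler_wpM2l => //; exact: ltW.
  have Hmain : ai * nrm2 mu Omega (fun x => u k.+1 x - pd x) ^+ 2 + `|c| ^+ 2
      <= `|ck k| ^+ 2 + (2 * (ai * X) + 2 * (ai * eta ^+ 2)).
    lra.
  apply: (le_trans Hmain); rewrite lerD2l.
  have egj : gj = gam alpha k + ai by rewrite /gj gamS.
  rewrite /X egj /C1 /C2.
  apply: (arith_step (rh := rho alpha k.+1) (ep := ep)) => //.
  all: try exact: gam_ge0.
  all: try (by apply: rho_ge; apply: ha).
  all: try exact: Rterm_lb.
  all: try exact: Hterm_lb.
have acc : forall k,
    \sum_(1 <= i < k.+1) (alpha i)^-1 * nrm2 mu Omega (fun x => u i x - pd x) ^+ 2
    + `|ck k| ^+ 2 <=
    `|w| ^+ 2 + \sum_(1 <= i < k.+1) (C1 * Hterm alpha dl i + C2 * Rterm alpha eps i).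
  elim=> [|k IH]; first by rewrite !big_geq // ck0 add0r addr0.
  rewrite (big_nat_recr k.+1) // (big_nat_recr k.+1) //; exact: acc_arith IH (step k).
have sge0 : forall (F : nat -> R) k, (forall i, (0 < i)%N -> 0 <= F i) ->
    0 <= \sum_(1 <= i < k.+1) F i.
  move=> F k HF; rewrite big_nat_cond; apply: sumr_ge0 => i /andP[/andP[i1 _] _].
  exact: HF.
exists (`|w| ^+ 2 + C1 + C2 + 1); split.
  have := sqr_ge0 `|w|; lra.
move=> k.
rewrite (eq_big_nat _ _ (F2 := fun i =>
    (alpha i)^-1 * nrm2 mu Omega (fun x => u i x - pd x) ^+ 2)); last first.
  by move=> i /andP[i1 _]; rewrite HLHS //; apply: UL; case: (huk i i1).
apply: (final_arith (cw := `|ck k| ^+ 2)).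
- exact: sqr_ge0.
- exact: C10.
- exact: C20.
- apply: sge0 => i i0; apply: Rterm_ge0 => //; [exact: ha | exact: ltW (heps i i0)].
- by apply: sge0 => i i0; apply: Hterm_ge0 => //; exact: ha.
- exact: sqr_ge0.
- by have := acc k; rewrite big_split /= -!mulr_sumr.
Qed.
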